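(* Let $q$ be a prime power. For $1\leq i\leq k$, let $b_i,\delta\in\mathbb{F}_{q^2}$ and let $s_i$ be positive integers. Let $$P_1(x)=\sum_{i=1}^{k}b_i(x^q+x+\delta)^{s_i}-x,\qquad P_2(x)=\sum_{i=1}^{k}b_i^q(x^q+x+\delta)^{qs_i}-x .$$ Then $P_1(x)$ is a permutation polynomial of $\mathbb{F}_{q^2}$ if and only if $P_2(x)$ is a permutation polynomial of $\mathbb{F}_{q^2}$. Moreover, if $P_1(x)$ permutes $\mathbb{F}_{q^2}$, then $$P_1^{-1}(x)+x=\left(P_2^{-1}(x)+x\right)^q,$$ where $P_1^{-1}(x)$ and $P_2^{-1}(x)$ are the compositional inverses of $P_1(x)$ and $P_2(x)$ over $\mathbb{F}_{q^2}$.
   Context: A polynomial $f\in\mathbb{F}_{Q}[x]$ is a permutation polynomial of $\mathbb{F}_Q$ if the map $c\mapsto f(c)$ is a bijection of $\mathbb{F}_Q$. Its compositional inverse $f^{-1}(x)$ is the unique polynomial with $f(f^{-1}(x))\equiv f^{-1}(f(x))\equiv x \pmod{x^Q-x}$; identities between polynomials are understood as identities of the induced functions on $\mathbb{F}_Q$ (i.e. modulo $x^Q-x$). *)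

(* Defs.v *)
From mathcomp Require Import all_boot all_order all_algebra all_field.
Set Implicit Arguments. Unset Strict Implicit. Unset Printing Implicit Defensive.
Import GRing.Theory.
Local Open Scope ring_scope.

Definition is_perm_poly (F : finFieldType) (f : {poly F}) : Prop :=
  bijective (fun c : F => f.[c]).

(* g is a compositional inverse of f over F: f(g(x)) = g(f(x)) = x
   as induced functions on F (i.e. modulo x^|F| - x). *)
Definition is_comp_inv (F : finFieldType) (f g : {poly F}) : Prop :=
  forall c : F, f.[g.[c]] = c /\ g.[f.[c]] = c.

(* Main.v *)
Require Import Defs.
From mathcomp Require Import all_boot all_order all_algebra all_field.
From mathcomp Require Import ring.
Import GRing.Theory.
Local Open Scope ring_scope.

Section Aux.
Variables (F : finFieldType) (q : nat).
Hypothesis hq : exists p e : nat, [/\ prime p, (0 < e)%N & q = p ^ e]%N.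
Hypothesis hF : #|F| = (q ^ 2)%N.

Lemma fqD (a b : F) : (a + b) ^+ q = a ^+ q + b ^+ q.
Proof.
have [p [e [pp e0 qE]]] := hq.
rewrite qE; apply: exprDn_pchar.
have pc : p \in [pchar F].
  apply: (@card_finPcharP _ p (e * 2) _ pp); by rewrite hF qE expnM.
by rewrite (eq_pnat _ (pcharf_eq pc)) pnatX pnat_id.
Qed.

Lemma fq0 : (0 : F) ^+ q = 0.
Proof. have [p [e [pp e0 qE]]] := hq; rewrite qE expr0n expn_eq0.
by case: p pp {qE}. Qed.

Lemma fqB (a b : F) : (a - b) ^+ q = a ^+ q - b ^+ q.
Proof. by rewrite -{2}(subrK b a) (fqD (a - b) b) addrK. Qed.

Lemma fqq (a : F) : (a ^+ q) ^+ q = a.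
Proof. by rewrite -exprM -[(q * q)%N]/(q ^ 2)%N -hF expf_card. Qed.

Lemma fq_inj : injective (fun a : F => a ^+ q).
Proof. by move=> a b /(congr1 (fun a : F => a ^+ q)); rewrite !fqq. Qed.
End Aux.

Theorem proposition3p1 (F : finFieldType) (q : nat)
  (hq : exists p e : nat, [/\ prime p, (0 < e)%N & q = p ^ e]%N)
  (hF : #|F| = (q ^ 2)%N)
  (k : nat) (b : 'I_k -> F) (s : 'I_k -> nat) (hs : forall i, (0 < s i)%N)
  (delta : F) :
  let P1 : {poly F} :=
    \sum_(i < k) b i *: ('X^q + 'X + delta%:P) ^+ s i - 'X in
  let P2 : {poly F} :=
    \sum_(i < k) (b i ^+ q) *: ('X^q + 'X + delta%:P) ^+ (q * s i) - 'X in
  (is_perm_poly P1 <-> is_perm_poly P2) /\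
  (is_perm_poly P1 ->
     forall g1 g2 : {poly F}, is_comp_inv P1 g1 -> is_comp_inv P2 g2 ->
     forall c : F, g1.[c] + c = (g2.[c] + c) ^+ q).
Proof.
move=> P1 P2.
have fD := @fqD F q hq hF; have f0 := @fq0 F q hq.
have fB := @fqB F q hq hF; have fQ := @fqq F q hF.
have fI := @fq_inj F q hF.
pose T (x : F) := x ^+ q + x + delta.
pose A (x : F) := \sum_(i < k) b i * T x ^+ s i.
have E1 x : P1.[x] = A x - x.
  rewrite /P1 hornerE horner_sum hornerN hornerX; congr (_ - _).
  by apply: eq_bigr => i _; rewrite !hornerE.
have E2 x : P2.[x] = (A x) ^+ q - x.
  rewrite /P2 hornerE horner_sum hornerN hornerX; congr (_ - _).
  rewrite /A (big_morph (fun a : F => a ^+ q) fD f0).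
  apply: eq_bigr => i _; rewrite !hornerE. by rewrite exprMn -exprM mulnC.
have TE x y : T ((x + y) ^+ q - y) = T x.
  rewrite /T fB fD fD !fQ; congr (_ + _).
  ring.
have M21 x y : P2.[x] = y -> P1.[(x + y) ^+ q - y] = y.
  rewrite E2 E1 => h; rewrite /A TE -/(A x).
  have -> : A x = (x + y) ^+ q by rewrite -[A x]fQ -h; congr (_ ^+ q); ring.
  ring.
have M12 x y : P1.[x] = y -> P2.[(x + y) ^+ q - y] = y.
  rewrite E2 E1 => h; rewrite /A TE -/(A x).
  have -> : A x = x + y by rewrite -h; ring.
  ring.
have alinj y : injective (fun x : F => (x + y) ^+ q - y).
  by move=> u v /addIr /fI /addIr.
split.
  split=> /bij_inj hinj; apply: injF_bij => u v huv.
    apply: (alinj (P2.[u])); apply: hinj => /=.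
    by rewrite (M21 u _ erefl) (M21 v _ (esym huv)).
  apply: (alinj (P1.[u])); apply: hinj => /=.
  by rewrite (M12 u _ erefl) (M12 v _ (esym huv)).
move=> _ g1 g2 h1 h2 c.
have [h2a _] := h2 c.
have := M21 _ _ h2a => e.
have [_ h1b] := h1 ((g2.[c] + c) ^+ q - c).
by rewrite -{1}e h1b subrK.
Qed.
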